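(* Let $\mathcal{F}=\{f_i\}_{i=1}^N$ be a frame for $\mathbb{R}^n$. If $\mathcal{F}$ has the exact PR-redundancy property, then the matrices $\{f_if_i^{T}\}_{i=1}^N$ are linearly independent in the space of real symmetric $n\times n$ matrices (and hence $N\le n(n+1)/2$). The converse does not hold in general: there exist $n$ and a frame $\mathcal{F}=\{f_i\}_{i=1}^N$ for $\mathbb{R}^n$ with $\{f_if_i^T\}_{i=1}^N$ linearly independent which does not have the exact PR-redundancy property.
   Context: A frame for $\mathbb{R}^n$ is a finite spanning sequence. Let $\mathcal{S}_2$ be the set of real symmetric $n\times n$ matrices of rank at most $2$. For $\Lambda\subseteq\{1,\dots,N\}$ let $\mathcal{F}_\Lambda=\{f_i\}_{i\in\Lambda}$ and $\Theta_{L(\mathcal{F}_\Lambda)}(A)=(f_i^TAf_i)_{i\in\Lambda}$ for symmetric $A$. $\mathcal{F}$ has the exact PR-redundancy property if for every proper subset $\Lambda\subsetneq\{1,\dots,N\}$, $\ker(\Theta_{L(\mathcal{F}_\Lambda)})\cap\mathcal{S}_2\neq\ker(\Theta_{L(\mathcal{F})})\cap\mathcal{S}_2$. *)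

(* Defs.v *)
From HB Require Import structures.
From mathcomp Require Import all_boot all_order all_algebra.
From mathcomp Require Import reals.
Set Implicit Arguments. Unset Strict Implicit. Unset Printing Implicit Defensive.
Import Order.TTheory GRing.Theory Num.Theory.
Local Open Scope ring_scope.

Definition is_frame (R : realType) (n N : nat) (f : 'I_N -> 'cV[R]_n) : Prop :=
  forall v : 'cV[R]_n, exists c : 'I_N -> R, v = \sum_(i < N) c i *: f i.

Definition S2 (R : realType) (n : nat) (A : 'M[R]_n) : Prop :=
  A^T = A /\ (\rank A <= 2)%N.

(* ker(Theta_{L(F_Lambda)}) \cap S_2, as a predicate on n x n matrices:
   symmetric A of rank <= 2 with f_i^T A f_i = 0 for all i in Lambda. *)
Definition kerS2 (R : realType) (n N : nat) (f : 'I_N -> 'cV[R]_n)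
  (Lam : {set 'I_N}) : 'M[R]_n -> Prop :=
  fun A => S2 A /\ forall i, i \in Lam -> ((f i)^T *m A *m f i) 0 0 = 0.

Definition exact_PR_redundancy (R : realType) (n N : nat)
  (f : 'I_N -> 'cV[R]_n) : Prop :=
  forall Lam : {set 'I_N}, Lam \proper [set: 'I_N] ->
    kerS2 f Lam <> kerS2 f [set: 'I_N].

Definition outer_lin_indep (R : realType) (n N : nat)
  (f : 'I_N -> 'cV[R]_n) : Prop :=
  forall c : 'I_N -> R,
    \sum_(i < N) c i *: (f i *m (f i)^T) = 0 -> forall i, c i = 0.

(* Main.v *)
Require Import Defs.
From HB Require Import structures.
From mathcomp Require Import all_boot all_order all_algebra.
From mathcomp Require Import reals zify ring lra.
From Stdlib Require Import FunctionalExtensionality PropExtensionality.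
Import Order.TTheory GRing.Theory Num.Theory.
Local Open Scope ring_scope.

Lemma qform_tr (R : realType) n (f : 'cV[R]_n) (A : 'M[R]_n) :
  ((f^T *m A *m f) 0 0) = \tr (A *m (f *m f^T)).
Proof.
by rewrite -trace_mx11 [in RHS]mulmxA [in RHS]mxtrace_mulC [in RHS]mulmxA.
Qed.

Lemma part1a (R : realType) n N (f : 'I_N -> 'cV[R]_n) :
  exact_PR_redundancy f -> outer_lin_indep f.
Proof.
move=> HPR c Hc j.
case: (eqVneq (c j) 0) => // cj0.
exfalso.
have Hprop : [set~ j] \proper [set: 'I_N].
  by rewrite properT; apply/eqP => /setP /(_ j); rewrite !inE eqxx.
apply: (HPR _ Hprop).
apply: functional_extensionality => A.
apply: propositional_extensionality; split; last first.
  by case=> HA Hi; split => // i _; apply: Hi.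
case=> HA Hi; split => // i _.
case: (eqVneq i j) => [->|ij]; last by apply: Hi; rewrite !inE.
have key : \sum_(k < N) c k * ((f k)^T *m A *m f k) 0 0 = 0.
  under eq_bigr => k _ do rewrite qform_tr.
  have -> : \sum_(k < N) c k * \tr (A *m (f k *m (f k)^T))
        = \tr (A *m \sum_(k < N) c k *: (f k *m (f k)^T)).
    rewrite mulmx_sumr linear_sum; apply: eq_bigr => k _.
    by rewrite -scalemxAr linearZ.
  by rewrite Hc mulmx0 linear0.
rewrite (bigD1 j) //= big1 ?addr0 in key.
  by move/eqP: key; rewrite mulf_eq0 (negPf cj0) => /eqP.
move=> k kj; rewrite Hi ?mulr0 //; by rewrite !inE.
Qed.
Lemma tri_count n :
  (2 * \sum_(i < n) \sum_(j < n) (i <= j : nat) = n * n.+1)%N.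
Proof.
elim: n => [|n IH]; first by rewrite big_ord0.
rewrite big_ord_recr /=.
have -> : (\sum_(i < n) \sum_(j < n.+1) (i <= j : nat)
          = \sum_(i < n) \sum_(j < n) (i <= j : nat) + n)%N.
  rewrite (eq_bigr (fun i : 'I_n => \sum_(j < n) (i <= j : nat) + 1)%N).
    by rewrite big_split /= sum1_card card_ord.
  by move=> i _; rewrite big_ord_recr /= (ltnW (ltn_ord i)).
have -> : (\sum_(j < n.+1) (n <= j : nat) = 1)%N.
  rewrite big_ord_recr /= leqnn big1 // => j _.
  by rewrite leqNgt ltn_ord.
rewrite !mulnDr IH; lia.
Qed.

Lemma part1b (R : realType) n N (f : 'I_N -> 'cV[R]_n) :
  outer_lin_indep f -> (N <= n * n.+1 %/ 2)%N.
Proof.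
move=> Hli.
pose S := [set p : 'I_n * 'I_n | (p.1 <= p.2)%N].
have cardS : (2 * #|S| = n * n.+1)%N.
  rewrite -tri_count; congr (2 * _)%N.
  rewrite -sum1_card big_mkcond pair_big. apply: (@eq_bigr nat 0%N addn) => p _.
  by rewrite /S inE; case: (_ <= _)%N.
pose Mx := \matrix_(i < N, k < #|S|) (f i *m (f i)^T) (enum_val k).1 (enum_val k).2.
have free : row_free Mx.
  apply: inj_row_free => v Hv.
  pose B := \sum_(i < N) v 0 i *: (f i *m (f i)^T).
  have Bsym : B^T = B.
    apply/matrixP => a b; rewrite mxE !summxE; apply: eq_bigr => i _.
    by rewrite !mxE !big_ord1 !mxE [f i b _ * _]mulrC.
  have Bup : forall p, p \in S -> B p.1 p.2 = 0.
    move=> p pS.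
    have := congr1 (fun w : 'rV_#|S| => w 0 (enum_rank_in pS p)) Hv.
    rewrite /= !mxE => <-; rewrite /B summxE; apply: eq_bigr => i _.
    by rewrite /Mx !mxE enum_rankK_in.
  have B0 : B = 0.
    apply/matrixP => a b; rewrite [RHS]mxE.
    case: (leqP a b) => ab.
      by apply: (Bup (a, b)); rewrite inE.
    rewrite -Bsym mxE; apply: (Bup (b, a)); rewrite inE /=; exact: ltnW.
  apply/rowP => i; rewrite [RHS]mxE; exact: (Hli (fun i => v 0 i) B0 i).
have : (N <= #|S|)%N by rewrite -{1}(eqP free) rank_leq_col.
rewrite leq_divRL // => HN; lia.
Qed.
Lemma rank_def_ker (F : fieldType) n (A : 'M[F]_n) :
  (\rank A < n)%N -> exists2 u : 'rV_n, u != 0 & u *m A = 0.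
Proof.
move=> Hr.
have : kermx A != 0.
  rewrite -mxrank_eq0 mxrank_ker; apply/eqP; lia.
case: (pickP (fun i => row i (kermx A) != 0)) => [i Hi _|H].
  exists (row i (kermx A)) => //; apply/sub_kermxP; exact: row_sub.
case/negP; apply/eqP/row_matrixP => i; rewrite row0.
by have := H i => /= /negbFE /eqP.
Qed.
Definition tbl (R : realType) : seq (seq R) :=
  [:: [:: 1; 0; 0]; [:: 0; 1; 0]; [:: 0; 0; 1];
      [:: 1; 1; 1]; [:: 1; 1; -1]; [:: 1; 4; 2]].

Definition fex (R : realType) (k : 'I_6) : 'cV[R]_3 :=
  \col_i (nth 0 (nth [::] (tbl R) k) i).

Arguments fex {R} k.

Lemma fex_li (R : realType) : outer_lin_indep (@fex R).
Proof.
move=> c Hc.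
have E : forall a b : 'I_3, \sum_(k < 6) c k * (fex k *m (fex k)^T) a b = 0.
  move=> a b; have := congr1 (fun M : 'M[R]_3 => M a b) Hc.
  rewrite /= summxE mxE => H; apply: (etrans _ H); apply: eq_bigr => k _; by rewrite !mxE.
pose o0 : 'I_3 := ord0. pose o1 : 'I_3 := lift ord0 ord0. pose o2 : 'I_3 := lift ord0 (lift ord0 ord0).
have := E o0 o0; have := E o1 o1; have := E o2 o2.
have := E o0 o1; have := E o0 o2; have := E o1 o2.
rewrite !big_ord_recl !big_ord0 !mxE !big_ord1 !mxE /=.
move=> h1 h2 h3 h4 h5 h6.
case=> [[|[|[|[|[|[|m]]]]]] Hm] //.
- by rewrite (_ : Ordinal _ = ord0); [lra | apply: val_inj].
- by rewrite (_ : Ordinal _ = lift ord0 ord0); [lra | apply: val_inj].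
- by rewrite (_ : Ordinal _ = lift ord0 (lift ord0 ord0)); [lra | apply: val_inj].
- by rewrite (_ : Ordinal _ = lift ord0 (lift ord0 (lift ord0 ord0))); [lra | apply: val_inj].
- by rewrite (_ : Ordinal _ = lift ord0 (lift ord0 (lift ord0 (lift ord0 ord0)))); [lra | apply: val_inj].
- by rewrite (_ : Ordinal _ = lift ord0 (lift ord0 (lift ord0 (lift ord0 (lift ord0 ord0))))); [lra | apply: val_inj].
Qed.

Lemma fex_frame (R : realType) : is_frame (@fex R).
Proof.
move=> v; exists (fun k : 'I_6 => if (k < 3)%N then v (inord k) 0 else 0).
apply/matrixP => i j; rewrite ord1 summxE !big_ord_recl big_ord0 !mxE /=.
rewrite /bump /=.
case: i => [[|[|[|m]]] Hm] //=.
- by rewrite (_ : inord 0 = Ordinal Hm); [lra | apply: val_inj; rewrite /= inordK].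
- by rewrite (_ : inord 1 = Ordinal Hm); [lra | apply: val_inj; rewrite /= inordK].
- by rewrite (_ : inord 2 = Ordinal Hm); [lra | apply: val_inj; rewrite /= inordK].
Qed.


Lemma fex_notPR (R : realType) : ~ exact_PR_redundancy (@fex R).
Proof.
pose j2 : 'I_6 := lift ord0 (lift ord0 ord0).
move=> HPR.
have Hprop : [set~ j2] \proper [set: 'I_6].
  by rewrite properT; apply/eqP => /setP /(_ j2); rewrite !inE eqxx.
apply: (HPR _ Hprop).
apply: functional_extensionality => A.
apply: propositional_extensionality; split; last first.
  by case=> HA Hi; split => // i _; apply: Hi.
case=> HS Hi; split => // i _.
case: (eqVneq i j2) => [->|ij]; last by apply: Hi; rewrite !inE.
case: HS => HAs HAr.
have sym a b : A a b = A b a by rewrite -{1}HAs mxE.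
pose o0 : 'I_3 := ord0. pose o1 : 'I_3 := lift ord0 ord0. pose o2 : 'I_3 := lift ord0 (lift ord0 ord0).
have := Hi ord0; have := Hi (lift ord0 ord0);
have := Hi (lift ord0 (lift ord0 (lift ord0 ord0)));
have := Hi (lift ord0 (lift ord0 (lift ord0 (lift ord0 ord0))));
have := Hi (lift ord0 (lift ord0 (lift ord0 (lift ord0 (lift ord0 ord0))))).
rewrite !inE /=.
rewrite /j2 !mxE !big_ord_recl !big_ord0 !mxE /=.
rewrite !big_ord_recl !big_ord0 !mxE /=.
move=> h5 h4 h3 h2 h1.
have := sym o1 o0; have := sym o2 o0; have := sym o2 o1.
rewrite /o0 /o1 /o2 => s21 s20 s10.
have {h1 h2 h3 h4 h5} [e00 e11 e02 e12 e22] :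
  [/\ A ord0 ord0 = 0, A (lift ord0 ord0) (lift ord0 ord0) = 0,
      A ord0 (lift ord0 (lift ord0 ord0)) = 0,
      A (lift ord0 ord0) (lift ord0 (lift ord0 ord0)) = 0 &
      A (lift ord0 (lift ord0 ord0)) (lift ord0 (lift ord0 ord0)) =
        -2 * A ord0 (lift ord0 ord0)].
  have := h1 erefl; have := h2 erefl; have := h3 erefl; have := h4 erefl; have := h5 erefl.
  move=> {h1 h2 h3 h4 h5}; rewrite s21 s20 s10 => h5 h4 h3 h2 h1.
  split; lra.
suff a01 : A ord0 (lift ord0 ord0) = 0.
  rewrite e22 a01; lra.
have [u unz uA] := @rank_def_ker _ _ A (leq_ltn_trans HAr (ltnSn 2)).
case: (eqVneq (A ord0 (lift ord0 ord0)) 0) => // a0.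
case/eqP: unz.
have := congr1 (fun w : 'rV_3 => w 0 ord0) uA.
have := congr1 (fun w : 'rV_3 => w 0 (lift ord0 ord0)) uA.
have := congr1 (fun w : 'rV_3 => w 0 (lift ord0 (lift ord0 ord0))) uA.
rewrite /= !mxE !big_ord_recl !big_ord0 /=.
rewrite s21 s20 s10 e00 e11 e02 e12 e22 => q2 q1 q0.
have z k : u 0 k * A ord0 (lift ord0 ord0) = 0 -> u 0 k = 0.
  by move/eqP; rewrite mulf_eq0 (negPf a0) orbF => /eqP.
apply/rowP => k; rewrite mxE; apply: z.
case: k => [[|[|[|m]]] Hm] //.
- by rewrite (_ : Ordinal _ = ord0); [lra | apply: val_inj].
- by rewrite (_ : Ordinal _ = lift ord0 ord0); [lra | apply: val_inj].
- by rewrite (_ : Ordinal _ = lift ord0 (lift ord0 ord0)); [lra | apply: val_inj].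
Qed.

Theorem lemma1p5 (R : realType) :
  (forall (n N : nat) (f : 'I_N -> 'cV[R]_n),
     is_frame f -> exact_PR_redundancy f ->
     outer_lin_indep f /\ (N <= n * n.+1 %/ 2)%N) /\
  (exists (n N : nat) (f : 'I_N -> 'cV[R]_n),
     is_frame f /\ outer_lin_indep f /\ ~ exact_PR_redundancy f).
Proof.
split.
  move=> n N f _ HPR.
  have Hli := @part1a R n N f HPR.
  split => //; exact: (@part1b R n N f Hli).
exists 3%N, 6%N, (@fex R); split; first exact: fex_frame.
split; [exact: fex_li | exact: fex_notPR].
Qed.
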